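(* Let $\phi$ be a formula of $\mathsf{BSML}^{\sqcup}$ or of $\mathsf{BSML}^{\oslash}$. If $\phi$ is not valid, then there is a model $M=(W,R,V)$ with $W$ finite and a state $s\subseteq W$ such that $M,s\not\models\phi$.
   Context: Formulas: $\phi ::= p \mid \neg\phi \mid (\phi\wedge\phi) \mid (\phi\vee\phi) \mid \Diamond\phi \mid \mathrm{NE}$ for $\mathsf{BSML}$; $\mathsf{BSML}^{\sqcup}$ adds $\phi\sqcup\phi$, $\mathsf{BSML}^{\oslash}$ adds $\oslash\phi$. Models $M=(W,R,V)$: $W\ne\emptyset$, $R\subseteq W\times W$, $V$ a valuation; states are subsets of $W$; $R[w]=\{v:wRv\}$. Support/anti-support: $s\models p$ iff $s\subseteq V(p)$; $s\dashv p$ iff $s\cap V(p)=\emptyset$; $s\models\mathrm{NE}$ iff $s\ne\emptyset$; $s\dashv\mathrm{NE}$ iff $s=\emptyset$; $s\models\neg\phi$ iff $s\dashv\phi$; $s\dashv\neg\phi$ iff $s\models\phi$; $s\models\phi\wedge\psi$ iff both; $s\dashv\phi\wedge\psi$ iff $s=t\cup u$ with $t\dashv\phi$, $u\dashv\psi$; $s\models\phi\vee\psi$ iff $s=t\cup u$ with $t\models\phi$, $u\models\psi$; $s\dashv\phi\vee\psi$ iff $s\dashv\phi$ and $s\dashv\psi$; $s\models\phi\sqcup\psi$ iff $s\models\phi$ or $s\models\psi$; $s\dashv\phi\sqcup\psi$ iff $s\dashv\phi$ and $s\dashv\psi$; $s\models\Diamond\phi$ iff each $w\in s$ has a nonempty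 $t\subseteq R[w]$ with $t\models\phi$; $s\dashv\Diamond\phi$ iff $R[w]\dashv\phi$ for all $w\in s$; $s\models\oslash\phi$ iff $s\models\phi$ or $s=\emptyset$; $s\dashv\oslash\phi$ iff $s\dashv\phi$. $\phi$ is valid if $M,s\models\phi$ for every model $M$ and every state $s$ on $M$. *)

(* Defs.v *)
(* Bilateral state-based modal logic BSML with global
   disjunction (gor, ⊔) and emptiness operator (oslash, ⊘). *)
From Stdlib Require Import FinFun.

Inductive form : Type :=
| Var : nat -> form
| Neg : form -> form
| And : form -> form -> form
| Or  : form -> form -> form
| Dia : form -> form
| NE  : form
| Gor : form -> form -> form
| Osl : form -> form.

Fixpoint in_BSML_gor (f : form) : Prop :=
  match f with
  | Var _ | NE => True
  | Neg a | Dia a => in_BSML_gor a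
  | And a b | Or a b | Gor a b => in_BSML_gor a /\ in_BSML_gor b
  | Osl _ => False
  end.

Fixpoint in_BSML_osl (f : form) : Prop :=
  match f with
  | Var _ | NE => True
  | Neg a | Dia a | Osl a => in_BSML_osl a
  | And a b | Or a b => in_BSML_osl a /\ in_BSML_osl b
  | Gor _ _ => False
  end.

(* A model on carrier W (nonemptiness of W is required separately). *)
Record model (W : Type) := Model {
  rel : W -> W -> Prop;
  val : nat -> W -> Prop
}.
Arguments rel {W} _ _ _.
Arguments val {W} _ _ _.

Definition state (W : Type) := W -> Prop.

Definition is_union {W : Type} (s t u : state W) : Prop :=
  forall w, s w <-> (t w \/ u w).

Section Sem.
Context {W : Type} (M : model W).

Fixpoint supp (s : state W) (f : form) {struct f} : Prop :=
  match f with
  | Var p => forall w, s w -> val M p w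
  | Neg a => anti s a
  | And a b => supp s a /\ supp s b
  | Or a b => exists t u, is_union s t u /\ supp t a /\ supp u b
  | Dia a => forall w, s w ->
       exists t : state W, (exists v, t v) /\ (forall v, t v -> rel M w v)
                           /\ supp t a
  | NE => exists w, s w
  | Gor a b => supp s a \/ supp s b
  | Osl a => supp s a \/ (forall w, ~ s w)
  end
with anti (s : state W) (f : form) {struct f} : Prop :=
  match f with
  | Var p => forall w, s w -> ~ val M p w
  | Neg a => supp s a
  | And a b => exists t u, is_union s t u /\ anti t a /\ anti u b
  | Or a b => anti s a /\ anti s b
  | Dia a => forall w, s w -> anti (fun v => rel M w v) a
  | NE => forall w, ~ s w
  | Gor a b => anti s a /\ anti s b
  | Osl a => anti s a
  end.
End Sem.

Definition valid (f : form) : Prop :=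
  forall (W : Type) (M : model W), inhabited W -> forall s : state W, supp M s f.

(* Main.v *)
Require Import Defs.
From Stdlib Require Import FinFun.
From Stdlib Require Import List Arith Lia Classical ClassicalEpsilon Fin.
Import ListNotations.

Fixpoint md (f : form) : nat :=
  match f with
  | Var _ | NE => 0
  | Neg a | Osl a => md a
  | And a b | Or a b | Gor a b => Nat.max (md a) (md b)
  | Dia a => S (md a)
  end.

Fixpoint vars (f : form) : list nat :=
  match f with
  | Var p => [p]
  | NE => []
  | Neg a | Osl a | Dia a => vars a
  | And a b | Or a b | Gor a b => vars a ++ vars b
  end.

Fixpoint bis (P : list nat) {W1 W2 : Type} (M1 : model W1) (M2 : model W2)
  (k : nat) (w : W1) (x : W2) : Prop :=
  (forall p, In p P -> (val M1 p w <-> val M2 p x)) /\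
  match k with
  | 0 => True
  | S j => (forall v, rel M1 w v -> exists y, rel M2 x y /\ bis P M1 M2 j v y) /\
           (forall y, rel M2 x y -> exists v, rel M1 w v /\ bis P M1 M2 j v y)
  end.

Lemma bis_sym P {W1 W2} (M1 : model W1) (M2 : model W2) k :
  forall w x, bis P M1 M2 k w x -> bis P M2 M1 k x w.
Proof.
  induction k; simpl; intros w x [Hv H]; split.
  - intros p Hp; symmetry; auto.
  - auto.
  - intros p Hp; symmetry; auto.
  - destruct H as [Hf Hb]; split.
    + intros y Hy; destruct (Hb y Hy) as [v [? ?]]; eauto.
    + intros v Hv'; destruct (Hf v Hv') as [y [? ?]]; eauto.
Qed.

Lemma bis_trans P {W1 W2 W3} (M1 : model W1) (M2 : model W2) (M3 : model W3) k :
  forall a b c, bis P M1 M2 k a b -> bis P M2 M3 k b c -> bis P M1 M3 k a c.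
Proof.
  induction k; simpl; intros a b c [Hv1 H1] [Hv2 H2]; split.
  - intros p Hp; rewrite Hv1 by auto; auto.
  - auto.
  - intros p Hp; rewrite Hv1 by auto; auto.
  - destruct H1 as [Hf1 Hb1]; destruct H2 as [Hf2 Hb2]; split.
    + intros v Hv; destruct (Hf1 v Hv) as [y [Hy Hby]].
      destruct (Hf2 y Hy) as [z [Hz Hbz]]; eauto.
    + intros z Hz; destruct (Hb2 z Hz) as [y [Hy Hby]].
      destruct (Hb1 y Hy) as [v [Hv Hbv]]; eauto.
Qed.

Lemma bis_mono P {W1 W2} (M1 : model W1) (M2 : model W2) :
  forall k w x, bis P M1 M2 (S k) w x -> bis P M1 M2 k w x.
Proof.
  induction k; simpl; intros w x [Hv H]; split; auto.
  destruct H as [Hf Hb]; split.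
  - intros v Hv'; destruct (Hf v Hv') as [y [? ?]]; eauto.
  - intros y Hy; destruct (Hb y Hy) as [v [? ?]]; eauto.
Qed.

Lemma bis_le P {W1 W2} (M1 : model W1) (M2 : model W2) :
  forall j k w x, j <= k -> bis P M1 M2 k w x -> bis P M1 M2 j w x.
Proof.
  intros j k w x H; induction H; auto.
  intros Hb; apply IHle, bis_mono, Hb.
Qed.

Lemma bis_val P {W1 W2} (M1 : model W1) (M2 : model W2) k w x :
  bis P M1 M2 k w x -> forall p, In p P -> (val M1 p w <-> val M2 p x).
Proof. destruct k; simpl; tauto. Qed.

Definition tbis P {W1 W2} (M1 : model W1) (M2 : model W2) j
  (s : state W1) (s' : state W2) : Prop :=
  (forall w, s w -> exists x, s' x /\ bis P M1 M2 j w x) /\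
  (forall x, s' x -> exists w, s w /\ bis P M1 M2 j w x).

Lemma invariance P (a : form) :
  forall W1 W2 (M1 : model W1) (M2 : model W2) j s s',
  (forall p, In p (vars a) -> In p P) -> md a <= j ->
  tbis P M1 M2 j s s' ->
  (supp M1 s a -> supp M2 s' a) /\ (anti M1 s a -> anti M2 s' a).
Proof.
  induction a; intros W1 W2 M1 M2 j s s' HP Hd [Hf Hb]; simpl in *.
  - split.
    + intros H x Hx; destruct (Hb x Hx) as [w [Hw Hv]].
      apply (bis_val _ _ _ _ _ _ Hv); auto.
    + intros H x Hx; destruct (Hb x Hx) as [w [Hw Hv]].
      rewrite <- (bis_val _ _ _ _ _ _ Hv); auto.
  - destruct (IHa W1 W2 M1 M2 j s s' HP Hd (conj Hf Hb)); tauto.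
  - assert (HPa : forall p, In p (vars a1) -> In p P) by (intros; apply HP, in_or_app; auto).
    assert (HPb : forall p, In p (vars a2) -> In p P) by (intros; apply HP, in_or_app; auto).
    assert (Hda : md a1 <= j) by lia. assert (Hdb : md a2 <= j) by lia.
    split.
    + intros [H1 H2]; split.
      * apply (IHa1 W1 W2 M1 M2 j s s' HPa Hda (conj Hf Hb)); auto.
      * apply (IHa2 W1 W2 M1 M2 j s s' HPb Hdb (conj Hf Hb)); auto.
    + intros [t [u [Hu [Ht1 Hu1]]]].
      exists (fun x => s' x /\ exists w, t w /\ bis P M1 M2 j w x).
      exists (fun x => s' x /\ exists w, u w /\ bis P M1 M2 j w x).
      split; [|split].
      * intros x; split.
        -- intros Hx; destruct (Hb x Hx) as [w [Hw Hbw]].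
           apply Hu in Hw; destruct Hw; [left|right]; eauto.
        -- intros [[? _]|[? _]]; auto.
      * apply (IHa1 W1 W2 M1 M2 j t _ HPa Hda); [split|auto].
        -- intros w Hw. assert (s w) by (apply Hu; auto).
           destruct (Hf w H) as [x [Hx Hbx]]; exists x; split; [split; [auto| exists w; auto] | auto].
        -- intros x [_ [w [? ?]]]; eauto.
      * apply (IHa2 W1 W2 M1 M2 j u _ HPb Hdb); [split|auto].
        -- intros w Hw. assert (s w) by (apply Hu; auto).
           destruct (Hf w H) as [x [Hx Hbx]]; exists x; split; [split; [auto| exists w; auto] | auto].
        -- intros x [_ [w [? ?]]]; eauto.
  - assert (HPa : forall p, In p (vars a1) -> In p P) by (intros; apply HP, in_or_app; auto).
    assert (HPb : forall p, In p (vars a2) -> In p P) by (intros; apply HP, in_or_app; auto).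
    assert (Hda : md a1 <= j) by lia. assert (Hdb : md a2 <= j) by lia.
    split.
    + intros [t [u [Hu [Ht1 Hu1]]]].
      exists (fun x => s' x /\ exists w, t w /\ bis P M1 M2 j w x).
      exists (fun x => s' x /\ exists w, u w /\ bis P M1 M2 j w x).
      split; [|split].
      * intros x; split.
        -- intros Hx; destruct (Hb x Hx) as [w [Hw Hbw]].
           apply Hu in Hw; destruct Hw; [left|right]; eauto.
        -- intros [[? _]|[? _]]; auto.
      * apply (IHa1 W1 W2 M1 M2 j t _ HPa Hda); [split|auto].
        -- intros w Hw. assert (s w) by (apply Hu; auto).
           destruct (Hf w H) as [x [Hx Hbx]]; exists x; split; [split; [auto| exists w; auto] | auto].
        -- intros x [_ [w [? ?]]]; eauto.
      * apply (IHa2 W1 W2 M1 M2 j u _ HPb Hdb); [split|auto].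
        -- intros w Hw. assert (s w) by (apply Hu; auto).
           destruct (Hf w H) as [x [Hx Hbx]]; exists x; split; [split; [auto| exists w; auto] | auto].
        -- intros x [_ [w [? ?]]]; eauto.
    + intros [H1 H2]; split.
      * apply (IHa1 W1 W2 M1 M2 j s s' HPa Hda (conj Hf Hb)); auto.
      * apply (IHa2 W1 W2 M1 M2 j s s' HPb Hdb (conj Hf Hb)); auto.
  - destruct j as [|j]; [lia|]. assert (Hd' : md a <= j) by lia.
    split.
    + intros H x Hx. destruct (Hb x Hx) as [w [Hw [_ [Bf Bb]]]].
      destruct (H w Hw) as [t [[v0 Hv0] [HtR Ht]]].
      exists (fun y => rel M2 x y /\ exists v, t v /\ bis P M1 M2 j v y).
      split; [|split].
      * destruct (Bf v0 (HtR v0 Hv0)) as [y [Hy Hby]]; exists y; split; [auto| exists v0; auto].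
      * intros y [? _]; auto.
      * apply (IHa W1 W2 M1 M2 j t _ HP Hd'); [split|auto].
        -- intros v Hv. destruct (Bf v (HtR v Hv)) as [y [Hy Hby]]; exists y; split; [split; [auto| exists v; auto] | auto].
        -- intros y [_ [v [? ?]]]; eauto.
    + intros H x Hx. destruct (Hb x Hx) as [w [Hw [_ [Bf Bb]]]].
      apply (IHa W1 W2 M1 M2 j (fun v => rel M1 w v) _ HP Hd'); auto.
      split; auto.
  - split.
    + intros [w Hw]. destruct (Hf w Hw) as [x [? ?]]; eauto.
    + intros H x Hx. destruct (Hb x Hx) as [w [Hw _]]. eapply H; eauto.
  - assert (HPa : forall p, In p (vars a1) -> In p P) by (intros; apply HP, in_or_app; auto).
    assert (HPb : forall p, In p (vars a2) -> In p P) by (intros; apply HP, in_or_app; auto).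
    assert (Hda : md a1 <= j) by lia. assert (Hdb : md a2 <= j) by lia.
    destruct (IHa1 W1 W2 M1 M2 j s s' HPa Hda (conj Hf Hb)).
    destruct (IHa2 W1 W2 M1 M2 j s s' HPb Hdb (conj Hf Hb)).
    tauto.
  - destruct (IHa W1 W2 M1 M2 j s s' HP Hd (conj Hf Hb)).
    split; [|tauto].
    intros [H1|H1]; [left; auto|right].
    intros x Hx. destruct (Hb x Hx) as [w [Hw _]]. eapply H1; eauto.
Qed.

Fixpoint refine {W} (L : list (W -> Prop)) (Q : list (W -> Prop)) : list (W -> Prop) :=
  match Q with
  | [] => L
  | q :: Q' => flat_map (fun C => [fun w => C w /\ q w; fun w => C w /\ ~ q w]) (refine L Q')
  end.

Lemma refine_cover {W} (L Q : list (W -> Prop)) w :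
  (exists C, In C L /\ C w) -> exists D, In D (refine L Q) /\ D w.
Proof.
  intros H; induction Q as [|q Q IH]; simpl; auto.
  destruct IH as [C [HC HCw]].
  destruct (classic (q w)) as [Hq|Hq].
  - exists (fun w => C w /\ q w); split; auto.
    apply in_flat_map; exists C; simpl; auto.
  - exists (fun w => C w /\ ~ q w); split; auto.
    apply in_flat_map; exists C; simpl; auto.
Qed.

Lemma refine_agree {W} (L Q : list (W -> Prop)) D a b :
  In D (refine L Q) -> D a -> D b ->
  (exists C, In C L /\ C a /\ C b) /\ (forall q, In q Q -> (q a <-> q b)).
Proof.
  revert D; induction Q as [|q Q IH]; simpl; intros D HD Ha Hb.
  - split; [eauto | tauto].
  - apply in_flat_map in HD. destruct HD as [C [HC HD]].
    simpl in HD.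
    destruct HD as [HD|[HD|[]]]; subst D; destruct Ha as [Ha Hqa]; destruct Hb as [Hb Hqb];
      destruct (IH C HC Ha Hb) as [H1 H2]; split; auto;
      intros q' [Hq'|Hq']; subst; auto; tauto.
Qed.

Definition clique {W} (R : W -> W -> Prop) (L : list (W -> Prop)) :=
  (forall w, exists C, In C L /\ C w) /\
  (forall C a b, In C L -> C a -> C b -> R a b).

Lemma cover0 {W} (M : model W) (P : list nat) :
  clique (bis P M M 0) (refine [fun _ => True] (map (fun p w => val M p w) P)).
Proof.
  split.
  - intros w; apply refine_cover; exists (fun _ => True); simpl; auto.
  - intros C a b HC Ha Hb. destruct (refine_agree _ _ _ _ _ HC Ha Hb) as [_ H].
    simpl; split; auto. intros p Hp.
    apply (H (fun w => val M p w)). apply in_map_iff; eauto.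
Qed.

Lemma cover_all {W} (M : model W) (P : list nat) k :
  exists L, clique (bis P M M k) L.
Proof.
  induction k.
  - eexists; apply cover0.
  - destruct IHk as [L [Lc Lq]].
    exists (refine (refine [fun _ => True] (map (fun p w => val M p w) P))
                   (map (fun C w => exists v, rel M w v /\ C v) L)).
    split.
    + intros w; apply refine_cover; apply (proj1 (cover0 M P)).
    + intros D a b HD Ha Hb.
      destruct (refine_agree _ _ _ _ _ HD Ha Hb) as [[C [HC [Ca Cb]]] Hq].
      destruct (proj2 (cover0 M P) C a b HC Ca Cb) as [Hv _].
      simpl; split; auto. split.
      * intros v Hv'. destruct (Lc v) as [E [HE Ev]].
        assert (Hqe : (exists v, rel M a v /\ E v) <-> (exists v, rel M b v /\ E v)).
        { apply (Hq (fun w => exists v, rel M w v /\ E v)). apply in_map_iff; eauto. }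
        destruct (proj1 Hqe (ex_intro _ v (conj Hv' Ev))) as [y [Hy Ey]].
        exists y; split; auto. eapply Lq; eauto.
      * intros y Hy. destruct (Lc y) as [E [HE Ey]].
        assert (Hqe : (exists v, rel M a v /\ E v) <-> (exists v, rel M b v /\ E v)).
        { apply (Hq (fun w => exists v, rel M w v /\ E v)). apply in_map_iff; eauto. }
        destruct (proj2 Hqe (ex_intro _ y (conj Hy Ey))) as [v [Hv' Ev]].
        exists v; split; auto. eapply Lq; eauto.
Qed.

Lemma finite_quotient {W} (M : model W) (P : list nat) k :
  exists n (f : W -> Fin.t n),
    forall a b, f a = f b -> bis P M M k a b.
Proof.
  destruct (cover_all M P k) as [L [Lc Lq]].
  set (n := length L).
  assert (Hex : forall w, exists i : Fin.t n,
             nth (proj1_sig (Fin.to_nat i)) L (fun _ => False) w).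
  { intros w. destruct (Lc w) as [C [HC Cw]].
    destruct (In_nth L C (fun _ => False) HC) as [i [Hi Heq]].
    exists (Fin.of_nat_lt Hi). rewrite Fin.to_nat_of_nat. simpl. rewrite Heq; auto. }
  exists n, (fun w => proj1_sig (constructive_indefinite_description _ (Hex w))).
  intros a b Hab.
  destruct (constructive_indefinite_description _ (Hex a)) as [i Hi].
  destruct (constructive_indefinite_description _ (Hex b)) as [j Hj].
  simpl in Hab; subst j.
  eapply Lq; [| exact Hi | exact Hj].
  apply nth_In. apply proj2_sig.
Qed.

Theorem proposition3p21 (phi : form) :
  (in_BSML_gor phi \/ in_BSML_osl phi) ->
  ~ valid phi ->
  exists (W : Type) (M : model W) (s : state W),
    inhabited W /\ Finite W /\ ~ supp M s phi.
Proof.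
  intros _ Hnv.
  unfold valid in Hnv.
  apply not_all_ex_not in Hnv. destruct Hnv as [W Hnv].
  apply not_all_ex_not in Hnv. destruct Hnv as [M Hnv].
  apply imply_to_and in Hnv. destruct Hnv as [[w0] Hnv].
  apply not_all_ex_not in Hnv. destruct Hnv as [s Hns].
  set (P := vars phi). set (k := md phi).
  destruct (finite_quotient M P k) as [n [f Hf]].
  set (M2 := Model (Fin.t n)
               (fun i i' => exists a b, f a = i /\ f b = i' /\ rel M a b)
               (fun p i => exists a, f a = i /\ val M p a)).
  assert (Hclaim : forall j, j <= k -> forall w, bis P M M2 j w (f w)).
  { induction j; intros Hj w; simpl; split.
    - intros p Hp; split.
      + intros Hv; exists w; auto.
      + intros [a [Ha Hv]]. apply (bis_val _ _ _ _ _ _ (Hf a w Ha)); auto.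
    - auto.
    - intros p Hp; split.
      + intros Hv; exists w; auto.
      + intros [a [Ha Hv]]. apply (bis_val _ _ _ _ _ _ (Hf a w Ha)); auto.
    - split.
      + intros v Hv. exists (f v); split.
        * exists w, v; auto.
        * apply IHj; lia.
      + intros y [a [b [Ha [Hb Hab]]]].
        assert (Hbw : bis P M M (S j) a w) by (apply (bis_le P M M (S j) k); auto).
        destruct Hbw as [_ [Bf _]].
        destruct (Bf b Hab) as [v [Hv Hbv]].
        exists v; split; auto.
        apply (bis_trans P M M M2 j v b y).
        * apply bis_sym; auto.
        * subst y. apply IHj; lia. }
  exists (Fin.t n), M2, (fun x => exists w, s w /\ f w = x).
  split; [constructor; exact (f w0)|split; [apply Fin_Finite|]].
  intros Hs. apply Hns.
  refine (proj1 (invariance P phi (Fin.t n) W M2 M k _ s (fun p Hp => Hp) (le_n _) _) Hs).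
  - split.
    + intros x [w [Hw Hx]]. exists w; split; auto. subst x.
      apply bis_sym, Hclaim; auto.
    + intros w Hw. exists (f w); split; eauto.
      apply bis_sym, Hclaim; auto.
Qed.
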